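(* (i) No two distinct chordal hyperplanes meet in $\mathbb{CH}^{10}$. (ii) If a discriminant hyperplane and a chordal hyperplane meet in $\mathbb{CH}^{10}$, then they are orthogonal.
   Context: Let $\omega$ be a primitive cube root of unity, $\mathcal{E}=\mathbb{Z}[\omega]$, $\theta=\omega-\bar\omega=\sqrt{-3}$. Let $\Lambda=\mathcal{E}^{11}$ with Hermitian form whose Gram matrix is $(3)\oplus M\oplus M\oplus\begin{pmatrix}0&\theta\\ \bar\theta&0\end{pmatrix}$, where $M$ is the $4\times4$ matrix with $3$ on the diagonal, $\theta$ at $(i,i+1)$, $\bar\theta$ at $(i+1,i)$, $0$ elsewhere. $\mathbb{CH}^{10}$ is the set of negative lines in $\Lambda\otimes_{\mathcal{E}}\mathbb{C}$. A root is $r\in\Lambda$ with $\langle r,r\rangle=3$; nodal if $\langle r,\Lambda\rangle=\theta\mathcal{E}$, chordal if $\langle r,\Lambda\rangle=3\mathcal{E}$. A discriminant (resp. chordal) hyperplane is $r^\perp\cap\mathbb{CH}^{10}$ for a nodal (resp. chordal) root $r$. Hyperplanes $r^\perp$ and $s^\perp$ are orthogonal when $\langle r,s\rangle=0$. *)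

(* Defs.v *)
From HB Require Import structures.
From mathcomp Require Import all_boot all_order all_algebra.
From mathcomp Require Import complex.
From mathcomp Require Import Rstruct.
From Stdlib Require Rdefinitions.
Set Implicit Arguments. Unset Strict Implicit. Unset Printing Implicit Defensive.
Import Order.TTheory GRing.Theory Num.Theory.
Local Open Scope ring_scope.

Definition CC := complex Rdefinitions.R.

(* omega = (-1 + i sqrt 3)/2, a primitive cube root of unity *)
Definition omega : CC := Complex (- (1/2)) (Num.sqrt 3 / 2).
(* theta = omega - conj omega = sqrt(-3) *)
Definition theta : CC := omega - conjc omega.

Definition inE (z : CC) : Prop := exists a b : int, z = a%:~R + b%:~R * omega.

(* Gram matrix entries: (3) + M + M + [[0,theta],[conj theta,0]], indices 0..10 *)
Definition gram_entry (i j : nat) : CC :=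
  if (i == j) then (if (i <= 8)%N then 3 else 0)
  else if (j == i.+1) && (i \in [:: 1; 2; 3; 5; 6; 7; 9]) then theta
  else if (i == j.+1) && (j \in [:: 1; 2; 3; 5; 6; 7; 9]) then conjc theta
  else 0.

Definition gram : 'M[CC]_11 := \matrix_(i < 11, j < 11) gram_entry i j.

Definition hform (x y : 'rV[CC]_11) : CC :=
  \sum_(i < 11) \sum_(j < 11) x 0 i * gram i j * conjc (y 0 j).

Definition inLattice (v : 'rV[CC]_11) : Prop := forall i, inE (v 0 i).

Definition is_root (r : 'rV[CC]_11) : Prop := inLattice r /\ hform r r = 3.

Definition pairing_is (r : 'rV[CC]_11) (c : CC) : Prop :=
  forall z : CC, (exists x, inLattice x /\ hform r x = z) <->
                 (exists w, inE w /\ z = c * w).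

Definition nodal (r : 'rV[CC]_11) : Prop := is_root r /\ pairing_is r theta.
Definition chordal (r : 'rV[CC]_11) : Prop := is_root r /\ pairing_is r 3.

(* CH^10: negative lines; we represent points by negative vectors
   (all notions below are invariant under nonzero scaling). *)
Definition negative (v : 'rV[CC]_11) : Prop := hform v v < 0.

Definition hyperplane (r : 'rV[CC]_11) (v : 'rV[CC]_11) : Prop :=
  negative v /\ hform v r = 0.

Definition same_hyperplane (r s : 'rV[CC]_11) : Prop :=
  forall v, hyperplane r v <-> hyperplane s v.

Definition hyperplanes_meet (r s : 'rV[CC]_11) : Prop :=
  exists v, hyperplane r v /\ hyperplane s v.

Definition roots_orthogonal (r s : 'rV[CC]_11) : Prop := hform r s = 0.

(* Main.v *)
Require Import Defs.
From mathcomp Require Import all_boot all_order all_algebra.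
From mathcomp Require Import complex.
From HB Require Import structures.
From mathcomp Require Import all_boot all_order all_algebra.
From mathcomp Require Import complex.
From mathcomp Require Import Rstruct.
From mathcomp Require Import ring lra zify.
Require Import Defs.
Set Implicit Arguments. Unset Strict Implicit. Unset Printing Implicit Defensive.
Import Order.TTheory GRing.Theory Num.Theory.
Local Open Scope ring_scope.

Lemma omega2 : omega * omega = -1 - omega.
Proof.
rewrite /omega; apply/eqP; rewrite eq_complex /=.
have h3 : Num.sqrt (3:Rdefinitions.R) * Num.sqrt 3 = 3 by rewrite -expr2 sqr_sqrtr // ler0n.
apply/andP; split; apply/eqP; nra.
Qed.

Lemma conj_omega : conjc omega = -1 - omega.
Proof.
rewrite /omega; apply/eqP; rewrite eq_complex /=.
apply/andP; split; apply/eqP; lra.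
Qed.

Definition X (x : 'rV[CC]_11) (i : nat) : CC := x 0 (inord i).

Definition hexp (x y : nat -> CC) (t tb : CC) : CC :=
  3*x 0%N*y 0%N
  + 3*x 1%N*y 1%N + x 1%N*t*y 2%N + x 2%N*tb*y 1%N + 3*x 2%N*y 2%N + x 2%N*t*y 3%N
  + x 3%N*tb*y 2%N + 3*x 3%N*y 3%N + x 3%N*t*y 4%N + x 4%N*tb*y 3%N + 3*x 4%N*y 4%N
  + 3*x 5%N*y 5%N + x 5%N*t*y 6%N + x 6%N*tb*y 5%N + 3*x 6%N*y 6%N + x 6%N*t*y 7%N
  + x 7%N*tb*y 6%N + 3*x 7%N*y 7%N + x 7%N*t*y 8%N + x 8%N*tb*y 7%N + 3*x 8%N*y 8%N
  + x 9%N*t*y 10%N + x 10%N*tb*y 9%N.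

Lemma sum11 (H : nat -> nat -> CC) :
  \sum_(i < 11) \sum_(j < 11) H i j = \sum_(i <- iota 0 11) \sum_(j <- iota 0 11) H i j.
Proof.
transitivity (\sum_(0 <= i < 11) \sum_(0 <= j < 11) H i j); last by [].
rewrite big_mkord; apply: eq_bigr => i _; by rewrite big_mkord.
Qed.

Lemma hform_exp x y : hform x y = hexp (X x) (fun j => conjc (X y j)) theta (conjc theta).
Proof.
rewrite /hform.
transitivity (\sum_(i<11) \sum_(j<11) X x i * gram_entry i j * conjc (X y j)).
  by apply: eq_bigr => i _; apply: eq_bigr => j _; rewrite /X !inord_val mxE.
rewrite (sum11 (fun i j => X x i * gram_entry i j * conjc (X y j))) /= !big_cons !big_nil /gram_entry /= /hexp.
ring.
Qed.

Lemma cD (x y : CC) : conjc (x + y) = conjc x + conjc y. Proof. exact: rmorphD. Qed.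
Lemma cB (x y : CC) : conjc (x - y) = conjc x - conjc y. Proof. exact: rmorphB. Qed.
Lemma cN (x : CC) : conjc (- x) = - conjc x. Proof. exact: rmorphN. Qed.
Lemma cM (x y : CC) : conjc (x * y) = conjc x * conjc y. Proof. exact: rmorphM. Qed.
Lemma cI (n : int) : conjc (n%:~R : CC) = n%:~R. Proof. exact: rmorph_int. Qed.
Lemma cn (n : nat) : conjc (n%:R : CC) = n%:R. Proof. exact: rmorph_nat. Qed.
Lemma c0 : conjc (0 : CC) = 0. Proof. exact: rmorph0. Qed.
Lemma c1 : conjc (1 : CC) = 1. Proof. exact: rmorph1. Qed.
Lemma cK (x : CC) : conjc (conjc x) = x. Proof. exact: conjcK. Qed.
Lemma cV (x : CC) : conjc (x^-1) = (conjc x)^-1. Proof. exact: conjc_inv. Qed.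

Lemma theta_E : theta = 1 + 2 * omega.
Proof. rewrite /theta conj_omega; ring. Qed.

Lemma conj_theta : conjc theta = - theta.
Proof. by rewrite /theta cB cK opprB. Qed.

Lemma theta2 : theta * theta = -3.
Proof.
rewrite theta_E; transitivity (1 + 4*omega + 4*(omega*omega)); first ring.
rewrite omega2; ring.
Qed.

Lemma theta_tb : theta * conjc theta = 3.
Proof. by rewrite conj_theta mulrN theta2 opprK. Qed.

Lemma theta_neq0 : theta != 0.
Proof.
apply/eqP=> h; have := theta2; rewrite h mul0r => /eqP.
by rewrite eq_sym oppr_eq0 pnatr_eq0.
Qed.

Lemma inE_int (n : int) : inE n%:~R.
Proof. by exists n, 0; ring. Qed.

Lemma inE_omega : inE omega.
Proof. by exists 0, 1; ring. Qed.

Lemma inE_theta : inE theta.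
Proof. by exists 1, 2; rewrite theta_E; ring. Qed.

Lemma inE_add x y : inE x -> inE y -> inE (x + y).
Proof. by move=> [a [b ->]] [c [d ->]]; exists (a + c), (b + d); ring. Qed.

Lemma inE_opp x : inE x -> inE (- x).
Proof. by move=> [a [b ->]]; exists (- a), (- b); ring. Qed.

Lemma inE_mul x y : inE x -> inE y -> inE (x * y).
Proof.
move=> [a [b ->]] [c [d ->]]; exists (a * c - b * d), (a * d + b * c - b * d).
transitivity (a%:~R * c%:~R + (a%:~R * d%:~R + b%:~R * c%:~R) * omega
   + b%:~R * d%:~R * (omega * omega) : CC); first ring.
rewrite omega2; ring.
Qed.

Lemma inE_conj x : inE x -> inE (conjc x).
Proof.
move=> [a [b ->]]; exists (a - b), (- b).
by rewrite cD cM !cI conj_omega; ring.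
Qed.

Lemma inE_norm z : inE z -> exists n : int, z * conjc z = n%:~R.
Proof.
move=> [a [b ->]]; exists (a * a - a * b + b * b).
rewrite cD cM !cI conj_omega.
transitivity ((a * a - a * b)%:~R - b%:~R * b%:~R * (omega * omega + omega) : CC); first ring.
rewrite omega2; ring.
Qed.

Lemma conjc_eq0' (x : CC) : (conjc x == 0) = (x == 0). Proof. exact: conjc_eq0. Qed.
Lemma mulcJ_ge0' (x : CC) : 0 <= x * conjc x. Proof. exact: mulcJ_ge0. Qed.

Lemma X_lin a b x y i : X (a *: x + b *: y) i = a * X x i + b * X y i.
Proof. by rewrite /X !mxE. Qed.

Lemma hform_linl a b x y z : hform (a *: x + b *: y) z = a * hform x z + b * hform y z.
Proof. rewrite !hform_exp /hexp !X_lin; ring. Qed.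

Lemma hform_linr a b x y z :
  hform z (a *: x + b *: y) = conjc a * hform z x + conjc b * hform z y.
Proof. rewrite !hform_exp /hexp !X_lin; move: theta => t; rewrite !cD !cM; ring. Qed.

Lemma hform_herm x y : hform y x = conjc (hform x y).
Proof. rewrite !hform_exp /hexp; move: theta => t; rewrite !(cD, cM, cK, cn); ring. Qed.

Definition Pexp (x y : nat -> CC) (t tb : CC) : CC :=
  3*(x 0%N*y 0%N) + 3*((x 1%N + tb/3*x 2%N)*(y 1%N + t/3*y 2%N))
  + 2*((x 2%N + tb/2*x 3%N)*(y 2%N + t/2*y 3%N))
  + 3/2*((x 3%N + 2*tb/3*x 4%N)*(y 3%N + 2*t/3*y 4%N)) + 1*(x 4%N*y 4%N)
  + 3*((x 5%N + tb/3*x 6%N)*(y 5%N + t/3*y 6%N))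
  + 2*((x 6%N + tb/2*x 7%N)*(y 6%N + t/2*y 7%N))
  + 3/2*((x 7%N + 2*tb/3*x 8%N)*(y 7%N + 2*t/3*y 8%N)) + 1*(x 8%N*y 8%N)
  + 1/2*((t*x 9%N + x 10%N)*(tb*y 9%N + y 10%N)).

Lemma hexp_dec (x y : nat -> CC) t tb : t * tb = 3 ->
  hexp x y t tb = Pexp x y t tb - 1/2 * ((t * x 9%N - x 10%N) * (tb * y 9%N - y 10%N)).
Proof.
move=> h.
have t0 : t != 0 by apply/eqP=> t0; move: h; rewrite t0 mul0r => /eqP; rewrite eq_sym pnatr_eq0.
have -> : tb = 3 / t by rewrite -h [t * tb]mulrC mulfK.
rewrite /hexp /Pexp; field; exact: t0.
Qed.

Definition sq (c z : CC) := c * (z * conjc z).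
Definition ell x := theta * X x 9 - X x 10.
Definition Pf x :=
  sq 3 (X x 0) + sq 3 (X x 1 + conjc theta/3 * X x 2) + sq 2 (X x 2 + conjc theta/2*X x 3)
  + sq (3/2) (X x 3 + 2*conjc theta/3*X x 4) + sq 1 (X x 4)
  + sq 3 (X x 5 + conjc theta/3 * X x 6) + sq 2 (X x 6 + conjc theta/2*X x 7)
  + sq (3/2) (X x 7 + 2*conjc theta/3*X x 8) + sq 1 (X x 8)
  + sq (1/2) (theta * X x 9 + X x 10).

Lemma hform_dec x : hform x x = Pf x - 1/2 * (ell x * conjc (ell x)).
Proof.
rewrite hform_exp (hexp_dec _ _ theta_tb) /Pexp /Pf /sq /ell.
move: theta => t; rewrite !(cD, cB, cM, cV, cK, cn, c1); ring.
Qed.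

Lemma sq_ge0 c z : 0 <= c -> 0 <= sq c z.
Proof. by move=> hc; rewrite /sq mulr_ge0 // mulcJ_ge0'. Qed.

Lemma sq_eq0 c z : c != 0 -> sq c z = 0 -> z = 0.
Proof.
move=> hc /eqP; rewrite /sq mulf_eq0 (negbTE hc) /= mulf_eq0 conjc_eq0' orbb.
by move/eqP.
Qed.

Ltac pos := rewrite ?divr_ge0 ?ler0n ?ler01 //.

Lemma Pf_ge0 x : 0 <= Pf x.
Proof.
rewrite /Pf; repeat apply: addr_ge0; apply: sq_ge0; pos.
Qed.

Lemma sq_eq0' c z : 0 < c -> sq c z == 0 -> z = 0.
Proof. by move=> hc /eqP; apply: sq_eq0; rewrite gt_eqF. Qed.

Ltac spos := rewrite ?divr_gt0 ?ltr0n ?ltr01 //.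

Lemma two_neq0 : (2 : CC) != 0. Proof. by rewrite pnatr_eq0. Qed.

Lemma Pf_eq0 x : Pf x = 0 -> ell x = 0 -> forall i, (i < 11)%N -> X x i = 0.
Proof.
move=> /eqP H0 Hl; move: H0; rewrite /Pf.
do 9 (rewrite paddr_eq0; [| (repeat apply: addr_ge0); apply: sq_ge0; pos ..]).
move=> /andP[/andP[/andP[/andP[/andP[/andP[/andP[/andP[/andP[e0 e1] e2] e3] e4] e5] e6] e7] e8] e9].
have h0 := @sq_eq0' 3 _ ltac:(spos) e0.
have z1 := @sq_eq0' 3 _ ltac:(spos) e1.
have z2 := @sq_eq0' 2 _ ltac:(spos) e2.
have z3 := @sq_eq0' (3/2) _ ltac:(spos) e3.
have h4 := @sq_eq0' 1 _ ltac:(spos) e4.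
have z5 := @sq_eq0' 3 _ ltac:(spos) e5.
have z6 := @sq_eq0' 2 _ ltac:(spos) e6.
have z7 := @sq_eq0' (3/2) _ ltac:(spos) e7.
have h8 := @sq_eq0' 1 _ ltac:(spos) e8.
have z9 := @sq_eq0' (1/2) _ ltac:(spos) e9.
have h3 : X x 3 = 0 by move: z3; rewrite h4 mulr0 addr0.
have h2 : X x 2 = 0 by move: z2; rewrite h3 mulr0 addr0.
have h1 : X x 1 = 0 by move: z1; rewrite h2 mulr0 addr0.
have h7 : X x 7 = 0 by move: z7; rewrite h8 mulr0 addr0.
have h6 : X x 6 = 0 by move: z6; rewrite h7 mulr0 addr0.
have h5 : X x 5 = 0 by move: z5; rewrite h6 mulr0 addr0.
have h10 : X x 10 = - (theta * X x 9) by apply/eqP; rewrite -addr_eq0 addrC z9.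
have h9 : X x 9 = 0.
  move: Hl; rewrite /ell h10 opprK => /eqP.
  rewrite -mulr2n -mulr_natl mulf_eq0 (negbTE two_neq0) /= mulf_eq0 (negbTE theta_neq0) /=.
  by move/eqP.
have h10' : X x 10 = 0 by rewrite h10 h9 mulr0 oppr0.
by move=> [|[|[|[|[|[|[|[|[|[|[|i]]]]]]]]]]].
Qed.

Lemma coords0 u : (forall i, (i < 11)%N -> X u i = 0) -> forall z, hform z u = 0.
Proof. move=> hu z; rewrite hform_exp /hexp !hu // !c0; ring. Qed.

Lemma neg_orth u v : hform v v < 0 -> hform u v = 0 ->
  0 <= hform u u /\ (hform u u = 0 -> forall z, hform z u = 0).
Proof.
move=> hv huv.
have hvu : hform v u = 0 by rewrite hform_herm huv c0.
have ha : ell v != 0.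
  apply/eqP => a0; move: hv; rewrite hform_dec a0 mul0r mulr0 subr0 => h.
  by have := lt_geF h; rewrite Pf_ge0.
pose w := ell v *: u + (- ell u) *: v.
have ew : ell w = 0 by rewrite /w /ell !X_lin; ring.
have hw : hform w w = ell v * conjc (ell v) * hform u u + ell u * conjc (ell u) * hform v v.
  by rewrite /w hform_linl !hform_linr huv hvu cN; ring.
have Pw : 0 <= hform w w by rewrite hform_dec ew mul0r mulr0 subr0 Pf_ge0.
have Apos : 0 < ell v * conjc (ell v).
  by rewrite lt_def mulf_neq0 ?conjc_eq0' // mulcJ_ge0'.
have Bnn : 0 <= ell u * conjc (ell u) := mulcJ_ge0' _.
have BH : ell u * conjc (ell u) * hform v v <= 0 := mulr_ge0_le0 Bnn (ltW hv).
have AH : 0 <= ell v * conjc (ell v) * hform u u.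
  have -> : ell v * conjc (ell v) * hform u u = hform w w - ell u * conjc (ell u) * hform v v
    by rewrite hw; ring.
  by rewrite addr_ge0 // oppr_ge0.
split; first by rewrite -(pmulr_rge0 _ Apos).
move=> h0.
have B0 : ell u * conjc (ell u) * hform v v = 0.
  apply: le_anti; rewrite BH /=.
  by move: Pw; rewrite hw h0 mulr0 add0r.
have eu : ell u = 0.
  move/eqP: B0; rewrite mulf_eq0 (negbTE (ltr0_neq0 hv)) orbF mulf_eq0 conjc_eq0' orbb.
  by move/eqP.
have Pu : Pf u = 0.
  by move: h0; rewrite hform_dec eu mul0r mulr0 subr0.
exact: coords0 (Pf_eq0 Pu eu).
Qed.

Definition hrest (x y : nat -> CC) (t tb : CC) : CC :=
  3*x 1%N*y 1%N + x 1%N*t*y 2%N + x 2%N*tb*y 1%N + 3*x 2%N*y 2%N + x 2%N*t*y 3%N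
  + x 3%N*tb*y 2%N + 3*x 3%N*y 3%N + x 3%N*t*y 4%N + x 4%N*tb*y 3%N + 3*x 4%N*y 4%N
  + 3*x 5%N*y 5%N + x 5%N*t*y 6%N + x 6%N*tb*y 5%N + 3*x 6%N*y 6%N + x 6%N*t*y 7%N
  + x 7%N*tb*y 6%N + 3*x 7%N*y 7%N + x 7%N*t*y 8%N + x 8%N*tb*y 7%N + 3*x 8%N*y 8%N
  + x 9%N*t*y 10%N + x 10%N*tb*y 9%N.

Lemma hexp_rest x y t tb : hexp x y t tb = 3 * x 0%N * y 0%N + hrest x y t tb.
Proof. rewrite /hexp /hrest; ring. Qed.

Definition Dt (n : nat) (z : CC) := exists e, inE e /\ z = theta ^+ n * e.

Lemma Dt_add n x y : Dt n x -> Dt n y -> Dt n (x + y).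
Proof. by move=> [e [he ->]] [f [hf ->]]; exists (e + f); split; [apply: inE_add | ring]. Qed.

Lemma Dt3_mul3 a b c : Dt 1 a -> Dt 1 b -> Dt 1 c -> Dt 3 (a * b * c).
Proof.
move=> [e [he ->]] [f [hf ->]] [g [hg ->]]; exists (e * f * g); split.
  by apply: inE_mul => //; apply: inE_mul.
by rewrite !expr1 exprS expr2; ring.
Qed.

Lemma Dt1_theta : Dt 1 theta.
Proof. by exists 1; split; [apply: (inE_int 1) | rewrite expr1 mulr1]. Qed.

Lemma Dt1_tb : Dt 1 (conjc theta).
Proof. by exists (-1); split; [apply: (inE_int (-1)) | rewrite conj_theta expr1; ring]. Qed.

Lemma Dt1_3 : Dt 1 3.
Proof.
exists (- theta); split; first exact: inE_opp inE_theta.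
by rewrite expr1 mulrN theta2 opprK.
Qed.

Lemma Dt1_conj x : Dt 1 x -> Dt 1 (conjc x).
Proof.
move=> [e [he ->]]; exists (- conjc e); split; first exact: inE_opp (inE_conj he).
by rewrite cM !expr1 conj_theta; ring.
Qed.

Lemma hrest_D3 (x y : nat -> CC) :
  (forall i, (1 <= i <= 10)%N -> Dt 1 (x i)) -> (forall i, (1 <= i <= 10)%N -> Dt 1 (y i)) ->
  Dt 3 (hrest x y theta (conjc theta)).
Proof.
move=> hx hy; rewrite /hrest; repeat apply: Dt_add; apply: Dt3_mul3;
  first [ exact: Dt1_3 | exact: Dt1_theta | exact: Dt1_tb | (apply: hx; by []) | (apply: hy; by []) ].
Qed.

Lemma Dt3_E z : Dt 3 z -> exists e, inE e /\ z = 3 * theta * e.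
Proof.
move=> [e [he ->]]; exists (- e); split; first exact: inE_opp.
rewrite exprS expr2; transitivity (theta * (theta * theta) * e); first ring.
rewrite theta2; ring.
Qed.

Definition ek (k : nat) : 'rV[CC]_11 := \row_(j < 11) (if (j == k :> nat) then 1 else 0).

Lemma ek_lat k : inLattice (ek k).
Proof. move=> i; rewrite mxE; case: ifP => _; [exists 1, 0 | exists 0, 0]; ring. Qed.

Lemma X_ek k j : (j < 11)%N -> X (ek k) j = if j == k then 1 else 0.
Proof. by move=> hj; rewrite /X mxE inordK. Qed.

Lemma X_ekc k j : (j < 11)%N -> conjc (X (ek k) j) = if j == k then 1 else 0.
Proof. by move=> hj; rewrite X_ek //; case: ifP => _; [exact: c1 | exact: c0]. Qed.

Lemma pair3 r : chordal r -> forall x, inLattice x -> exists w, inE w /\ hform r x = 3 * w.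
Proof.
move=> [_ hp] x hx; have [w [hw h]] := proj1 (hp (hform r x)) (ex_intro _ x (conj hx erefl)).
by exists w.
Qed.

Lemma divT z e : inE e -> z * theta = 3 * e -> Dt 1 z.
Proof.
move=> he hz; exists (- e); split; first exact: inE_opp.
apply: (mulIf theta_neq0); rewrite hz expr1.
transitivity (- (theta * theta) * e); last by ring.
by rewrite theta2 opprK.
Qed.

Lemma divTb z e : inE e -> z * conjc theta = 3 * e -> Dt 1 z.
Proof.
move=> he hz; apply: (divT (inE_opp he)).
by rewrite mulrN -hz conj_theta mulrN opprK.
Qed.

Lemma lat_X x i : inLattice x -> inE (X x i).
Proof. by move=> hx; apply: hx. Qed.

Ltac clean e := rewrite -e /hexp !X_ekc //; move: (conjc theta) => tb; move: theta => t;
  rewrite /=; ring.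

Lemma chordal_coords r : chordal r -> forall i, (1 <= i <= 10)%N -> Dt 1 (X r i).
Proof.
move=> hc.
have hl : inLattice r by case: hc => [[]].
have E i : inE (X r i) := lat_X i hl.
have P k : exists w, inE w /\ hexp (X r) (fun j => conjc (X (ek k) j)) theta (conjc theta) = 3 * w.
  by have [w [hw h]] := pair3 hc (ek_lat k); exists w; rewrite -hform_exp.
have [w1 [hw1 e1]] := P 1%N; have [w2 [hw2 e2]] := P 2%N; have [w3 [hw3 e3]] := P 3%N.
have [w4 [hw4 e4]] := P 4%N; have [w5 [hw5 e5]] := P 5%N; have [w6 [hw6 e6]] := P 6%N.
have [w7 [hw7 e7]] := P 7%N; have [w8 [hw8 e8]] := P 8%N; have [w9 [hw9 e9]] := P 9%N.
have [w10 [hw10 e10]] := P 10%N.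
have tt : theta * conjc theta = 3 := theta_tb.
have t2 := theta2.
have f1 : 3 * X r 1 + X r 2 * conjc theta = 3 * w1 by clean e1.
have f2 : X r 1 * theta + 3 * X r 2 + X r 3 * conjc theta = 3 * w2 by clean e2.
have f3 : X r 2 * theta + 3 * X r 3 + X r 4 * conjc theta = 3 * w3 by clean e3.
have f4 : X r 3 * theta + 3 * X r 4 = 3 * w4 by clean e4.
have f5 : 3 * X r 5 + X r 6 * conjc theta = 3 * w5 by clean e5.
have f6 : X r 5 * theta + 3 * X r 6 + X r 7 * conjc theta = 3 * w6 by clean e6.
have f7 : X r 6 * theta + 3 * X r 7 + X r 8 * conjc theta = 3 * w7 by clean e7.
have f8 : X r 7 * theta + 3 * X r 8 = 3 * w8 by clean e8.
have f9 : X r 10 * conjc theta = 3 * w9 by clean e9.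
have f10 : X r 9 * theta = 3 * w10 by clean e10.
have d2 : Dt 1 (X r 2).
  by apply: (divTb (inE_add hw1 (inE_opp (E 1%N)))); rewrite [in RHS]mulrDr [in RHS]mulrN -f1; ring.
have d3 : Dt 1 (X r 3).
  by apply: (divT (inE_add hw4 (inE_opp (E 4%N)))); rewrite [in RHS]mulrDr [in RHS]mulrN -f4; ring.
have d6 : Dt 1 (X r 6).
  by apply: (divTb (inE_add hw5 (inE_opp (E 5%N)))); rewrite [in RHS]mulrDr [in RHS]mulrN -f5; ring.
have d7 : Dt 1 (X r 7).
  by apply: (divT (inE_add hw8 (inE_opp (E 8%N)))); rewrite [in RHS]mulrDr [in RHS]mulrN -f8; ring.
have d9 : Dt 1 (X r 9) := divT hw10 f10.
have d10 : Dt 1 (X r 10) := divTb hw9 f9.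
have d1 : Dt 1 (X r 1).
  case: d3 => [e [he h3]].
  apply: (divT (inE_add hw2 (inE_add (inE_opp (E 2%N)) (inE_opp he)))).
  rewrite [in RHS]mulrDr [in RHS]mulrDr !mulrN -f2 h3 expr1; rewrite -tt; ring.
have d4 : Dt 1 (X r 4).
  case: d2 => [e [he h2]].
  have hq : X r 2 * theta = - (3 * e).
    by rewrite h2 expr1; transitivity (- (- (theta * theta)) * e); [ring | rewrite t2; ring].
  apply: (divTb (inE_add hw3 (inE_add (inE_opp (E 3%N)) he))).
  rewrite [in RHS]mulrDr [in RHS]mulrDr mulrN -f3 hq; ring.
have d5 : Dt 1 (X r 5).
  case: d7 => [e [he h7]].
  apply: (divT (inE_add hw6 (inE_add (inE_opp (E 6%N)) (inE_opp he)))).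
  rewrite [in RHS]mulrDr [in RHS]mulrDr !mulrN -f6 h7 expr1; rewrite -tt; ring.
have d8 : Dt 1 (X r 8).
  case: d6 => [e [he h6]].
  have hq : X r 6 * theta = - (3 * e).
    by rewrite h6 expr1; transitivity (- (- (theta * theta)) * e); [ring | rewrite t2; ring].
  apply: (divTb (inE_add hw7 (inE_add (inE_opp (E 7%N)) he))).
  rewrite [in RHS]mulrDr [in RHS]mulrDr mulrN -f7 hq; ring.
by move=> [|[|[|[|[|[|[|[|[|[|[|i]]]]]]]]]]].
Qed.

Lemma three_neq0 : (3 : CC) != 0. Proof. by rewrite pnatr_eq0. Qed.

Lemma hform_split r s : chordal r -> chordal s ->
  exists e, inE e /\ hform r s = 3 * (X r 0 * conjc (X s 0)) + 3 * theta * e.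
Proof.
move=> hr hs; rewrite hform_exp hexp_rest.
have D := hrest_D3 (chordal_coords hr) (fun i hi => Dt1_conj (chordal_coords hs hi)).
have [e [he ->]] := Dt3_E D.
by exists e; split => //; ring.
Qed.

Lemma real_theta e (m : int) : inE e -> theta * e = m%:~R -> exists k : int, m = 3 * k.
Proof.
move=> [a [b ->]] h.
have E1 : theta * (a%:~R + b%:~R * omega) = (a - 2 * b)%:~R + (2 * a - b)%:~R * omega.
  rewrite theta_E.
  transitivity ((a - 2 * b)%:~R + (2 * a - b)%:~R * omega + 2 * b%:~R * (omega * omega + omega + 1) : CC);
    last by rewrite omega2; ring.
  ring.
have E2 : (m%:~R : CC) = (a - 2 * b)%:~R + (2 * a - b)%:~R * (-1 - omega).
  by rewrite -cI -h E1 cD cM !cI conj_omega.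
have c0' : (2 * a - b)%:~R * theta = 0 :> CC.
  rewrite theta_E; apply/eqP; rewrite -subr_eq0; apply/eqP.
  transitivity ((m%:~R - (m%:~R : CC)) : CC); last by rewrite subrr.
  rewrite -{1}h E1 E2; ring.
move/eqP: c0'; rewrite mulf_eq0 (negbTE theta_neq0) orbF intr_eq0 => /eqP hab.
have : (m%:~R : CC) = (a - 2 * b)%:~R.
  by rewrite -h E1 hab mul0r addr0.
move/eqP; rewrite eqr_int => /eqP ->.
exists (- a); lia.
Qed.

Lemma norm_mod r : chordal r -> exists n k : int, X r 0 * conjc (X r 0) = n%:~R /\ n = 1 - 3 * k.
Proof.
move=> hr.
have hl : inLattice r by case: hr => [[]].
have h3 : hform r r = 3 by case: hr => [[]].
have [n hn] := inE_norm (lat_X 0 hl).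
have [e [he h]] := hform_split hr hr.
have : theta * e = (1 - n)%:~R.
  apply: (mulfI three_neq0).
  transitivity (hform r r - 3 * (X r 0 * conjc (X r 0))); first by rewrite h; ring.
  by rewrite h3 hn; ring.
move/(real_theta he) => [k hk]; exists n, k; split => //; lia.
Qed.

Lemma chordal_not_orth r s : chordal r -> chordal s -> hform r s = 0 -> False.
Proof.
move=> hr hs h0.
have [nr [kr [hnr ekr]]] := norm_mod hr.
have [ns [ks [hns eks]]] := norm_mod hs.
have [e [he h]] := hform_split hr hs.
have [m hm] := inE_norm he.
have E : X r 0 * conjc (X s 0) = theta * (- e).
  apply: (mulfI three_neq0).
  transitivity (hform r s - 3 * theta * e); first by rewrite h; ring.
  by rewrite h0; ring.
have L : (nr * ns)%:~R = (X r 0 * conjc (X s 0)) * conjc (X r 0 * conjc (X s 0)) :> CC.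
  by rewrite cM cK; transitivity (nr%:~R * ns%:~R : CC); [ring | rewrite -hnr -hns; ring].
have R : (3 * m)%:~R = (theta * (- e)) * conjc (theta * (- e)) :> CC.
  rewrite cM cN conj_theta.
  transitivity (- (theta * theta) * (e * conjc e)); last by ring.
  by rewrite theta2 hm; ring.
have : (nr * ns)%:~R = (3 * m)%:~R :> CC by rewrite L R E.
move/eqP; rewrite eqr_int => /eqP; rewrite ekr eks => H.
nia.
Qed.

Lemma meet_bound r s v : hform r r = 3 -> hform s s = 3 -> hyperplane r v -> hyperplane s v ->
  0 <= 9 - hform r s * conjc (hform r s) /\
  (hform r s * conjc (hform r s) = 9 ->
     forall z, hform z (3 *: s + (- conjc (hform r s)) *: r) = 0).
Proof.
move=> hrr hss [hv hvr] [_ hvs].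
have hsr : hform s r = conjc (hform r s) by rewrite hform_herm.
have huv : hform (3 *: s + (- conjc (hform r s)) *: r) v = 0.
  by rewrite hform_linl (hform_herm v s) (hform_herm v r) hvs hvr c0; ring.
have huu : hform (3 *: s + (- conjc (hform r s)) *: r) (3 *: s + (- conjc (hform r s)) *: r)
   = 3 * (9 - hform r s * conjc (hform r s)).
  rewrite hform_linl !hform_linr hrr hss hsr cN cK cn; ring.
have [h1 h2] := neg_orth hv huv.
split; first by move: h1; rewrite huu pmulr_rge0 // ltr0n.
by move=> h9; apply: h2; rewrite huu h9 subrr mulr0.
Qed.

Lemma norm_ab r s w : hform s r = 3 * w -> forall k : int, w * conjc w = k%:~R ->
  hform r s * conjc (hform r s) = 9 * k%:~R.
Proof.
move=> hsr k hk; rewrite (hform_herm s r) hsr cK cM cn.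
transitivity (9 * (w * conjc w)); first ring.
by rewrite hk.
Qed.

Lemma k01 (k : int) (w : CC) : w * conjc w = k%:~R -> 0 <= 9 - 9 * (k%:~R : CC) -> k = 0 \/ k = 1.
Proof.
move=> hk h.
have k0 : (0 <= k)%R by rewrite -(ler0z CC) -hk mulcJ_ge0'.
have : (0 <= 9 - 9 * k)%R.
  rewrite -(ler0z CC); move: h; congr (_ <= _); rewrite intrB intrM; congr (_ - _ * _).
by lia.
Qed.

Lemma w0 (w : CC) : w * conjc w = (0%:~R) -> w = 0.
Proof. by move/eqP; rewrite mulf_eq0 conjc_eq0' orbb => /eqP. Qed.

Theorem theorem8p2 :
  (forall r s, chordal r -> chordal s -> ~ same_hyperplane r s ->
     ~ hyperplanes_meet r s) /\
  (forall r s, nodal r -> chordal s -> hyperplanes_meet r s -> roots_orthogonal r s).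
Proof.
split.
- move=> r s hr hs hns [v [hrv hsv]].
  have hrl : inLattice r by case: hr => [[]].
  have [w [hw hsr]] := pair3 hs hrl.
  have [k hk] := inE_norm hw.
  have [B1 B2] := meet_bound (proj2 (proj1 hr)) (proj2 (proj1 hs)) hrv hsv.
  have ha := norm_ab hsr hk.
  rewrite ha in B1 B2.
  case: (k01 hk B1) => ek; subst k.
    apply: (chordal_not_orth hr hs).
    by rewrite (hform_herm s r) hsr (w0 hk) mulr0 c0.
  have h9 : (9 : CC) * 1%:~R = 9 by rewrite mulr1.
  have B := B2 h9.
  have a0 : hform r s != 0.
    apply/eqP => a0; move: ha; rewrite a0 mul0r mulr1 => /eqP; by rewrite eq_sym pnatr_eq0.
  apply: hns => z; split; move=> [hz hzr]; split => //; have := B z;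
    rewrite hform_linr ?hzr cN cK cn ?mulr0 ?addr0 ?add0r.
    by move/eqP; rewrite mulf_eq0 (negbTE three_neq0) /= => /eqP.
  by move/eqP; rewrite mulf_eq0 oppr_eq0 (negbTE a0) /= => /eqP.
- move=> r s hr hs [v [hrv hsv]].
  have hrl : inLattice r by case: hr => [[]].
  have [w [hw hsr]] := pair3 hs hrl.
  have [k hk] := inE_norm hw.
  have [B1 B2] := meet_bound (proj2 (proj1 hr)) (proj2 (proj1 hs)) hrv hsv.
  have ha := norm_ab hsr hk.
  rewrite ha in B1 B2.
  case: (k01 hk B1) => ek; subst k.
    by rewrite /roots_orthogonal (hform_herm s r) hsr (w0 hk) mulr0 c0.
  have h9 : (9 : CC) * 1%:~R = 9 by rewrite mulr1.
  have B := B2 h9.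
  case: hr => [_ hp].
  have [x [hx hrx]] := proj2 (hp theta) (ex_intro _ 1 (conj (inE_int 1) (esym (mulr1 _)))).
  have [e [he hsx]] := pair3 hs hx.
  have [m hm] := inE_norm he.
  have hux : hform (3 *: s + (- conjc (hform r s)) *: r) x = 0 by rewrite hform_herm B c0.
  move: hux; rewrite hform_linl hsx hrx (hform_herm s r) hsr cK => hux.
  have E : 3 * e = w * theta.
    apply: (mulfI three_neq0); apply/eqP; rewrite -subr_eq0; apply/eqP; rewrite -hux; ring.
  have : (9 * m)%:~R = (3 : int)%:~R :> CC.
    transitivity ((3 * e) * conjc (3 * e)); first by rewrite cM cn; transitivity (9 * (e * conjc e)); [rewrite hm; ring | ring].
    rewrite E cM (mulrC (conjc w)).
    transitivity ((w * conjc w) * (theta * conjc theta)); first ring.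
    by rewrite hk theta_tb; ring.
  move/eqP; rewrite eqr_int => /eqP; lia.
Qed.
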